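(* Let $p>q>1$ be relatively prime integers. A sequence $\mathbf{x}=x_0x_1\cdots$ over a finite alphabet $A$ is $\frac pq$-automatic if and only if, for every $a\in A$, there exists a $\frac pq$-recognizable set $R_a$ such that $\{i\in\mathbb{N}: x_i=a\}=R_a\cap\mathbb{N}$.
   Context: $A_p=\{0,\ldots,p-1\}$; for $w=w_\ell\cdots w_0\in A_p^*$, $\mathrm{val}_{\frac pq}(w)=\sum_{i=0}^{\ell}\frac{w_i}{q}(\frac pq)^i$ (a rational number); $\mathrm{rep}_{\frac pq}(n)$ is the unique word not starting with $0$ of value $n$ ($\mathrm{rep}_{\frac pq}(0)=\varepsilon$). $\mathbf{x}$ is $\frac pq$-automatic if there is a deterministic finite automaton with output $(Q,q_0,A_p,\delta,\tau:Q\to A)$ with $x_n=\tau(\delta(q_0,\mathrm{rep}_{\frac pq}(n)))$ for all $n$. Let $N_{\frac pq}=\mathrm{val}_{\frac pq}(A_p^* )$. A subset $X\subseteq N_{\frac pq}$ is $\frac pq$-recognizable if there is a deterministic finite automaton over $A_p$ accepting a language $L$ with $\mathrm{val}_{\frac pq}(L)=X$. *)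

(* Defs.v *)
From mathcomp Require Import all_boot all_order all_algebra.
Set Implicit Arguments. Unset Strict Implicit. Unset Printing Implicit Defensive.
Import Order.TTheory GRing.Theory Num.Theory.

(* Words over A_p = {0,...,p-1} are represented as seq nat, written
   w = w_l ... w_0 from left to right (w_0 is the last element). *)
Definition in_Ap (p : nat) (w : seq nat) : bool := all (fun a => a < p) w.

Definition valpq (p q : nat) (w : seq nat) : rat :=
  (\sum_(i < size w) ((nth 0 (rev w) i)%:R / q%:R) * (p%:R / q%:R) ^+ i)%R.

(* rep_{p/q}(n): computed by the standard algorithm
   q n = p m + a, a = (q n) mod p, rep(n) = rep(m) a, rep(0) = epsilon.
   Since m < n for n > 0 (p > q), n steps of fuel suffice. *)
Fixpoint rep_fuel (p q k n : nat) : seq nat :=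
  match k with
  | 0 => [::]
  | k'.+1 => if n == 0 then [::]
             else rcons (rep_fuel p q k' ((q * n) %/ p)) ((q * n) %% p)
  end.

Definition reppq (p q n : nat) : seq nat := rep_fuel p q n n.

Definition step (p : nat) (Q : finType) (delta : Q -> 'I_p -> Q) (s : Q) (a : nat) : Q :=
  if @insub nat (fun k => k < p) 'I_p a is Some b then delta s b else s.

Definition run (p : nat) (Q : finType) (delta : Q -> 'I_p -> Q) (s : Q) (w : seq nat) : Q :=
  foldl (step delta) s w.

Definition pq_automatic (p q : nat) (A : Type) (x : nat -> A) : Prop :=
  exists (Q : finType) (q0 : Q) (delta : Q -> 'I_p -> Q) (tau : Q -> A),
    forall n, x n = tau (run delta q0 (reppq p q n)).

Definition pq_recognizable (p q : nat) (X : rat -> Prop) : Prop :=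
  exists (Q : finType) (q0 : Q) (delta : Q -> 'I_p -> Q) (F : pred Q),
    forall r : rat, X r <-> exists w : seq nat,
      [/\ in_Ap p w, run delta q0 w \in F & valpq p q w = r].

(* Main.v *)
Require Import Defs.
From mathcomp Require Import all_boot all_order all_algebra.
From mathcomp Require Import zify ring lra.
From Stdlib Require Import ClassicalEpsilon.
Set Implicit Arguments. Unset Strict Implicit. Unset Printing Implicit Defensive.
Import Order.TTheory GRing.Theory Num.Theory.

Lemma rep_fuelE p q k n : rep_fuel p q k.+1 n =
  if n == 0 then [::] else rcons (rep_fuel p q k ((q * n) %/ p)) ((q * n) %% p).
Proof. by []. Qed.

Lemma rep_fuel_S p q k n : q < p -> n <= k -> rep_fuel p q k.+1 n = rep_fuel p q k n.
Proof.
move=> hqp; elim: k n => [|k IH] n hn.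
  by move: hn; rewrite leqn0 => /eqP ->.
rewrite rep_fuelE [in RHS]rep_fuelE; case: eqP => // /eqP n0.
rewrite IH //.
have : (q * n) %/ p < n.
  rewrite ltn_divLR; last by lia.
  by rewrite mulnC ltn_pmul2l; lia.
lia.
Qed.

Lemma rep_fuel_ge p q k n : q < p -> n <= k -> rep_fuel p q k n = reppq p q n.
Proof.
move=> hqp; elim: k => [|k IH] hn.
  by move: hn; rewrite leqn0 => /eqP ->.
case: (ltngtP n k.+1) hn => // [hl|->] _; last by [].
by rewrite rep_fuel_S // IH.
Qed.

Lemma reppq0 p q : reppq p q 0 = [::].
Proof. by []. Qed.

Lemma reppqS p q n : q < p -> 0 < n ->
  reppq p q n = rcons (reppq p q ((q * n) %/ p)) ((q * n) %% p).
Proof.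
move=> hqp hn; rewrite /reppq; case: n hn => // n _; rewrite rep_fuelE /=.
rewrite rep_fuel_ge //.
have : (q * n.+1) %/ p < n.+1.
  rewrite ltn_divLR; last by lia.
  by rewrite mulnC ltn_pmul2l; lia.
lia.
Qed.

Lemma valpq_nil p q : valpq p q [::] = 0%R.
Proof. by rewrite /valpq big_ord0. Qed.

Lemma valpq_rcons p q u a :
  valpq p q (rcons u a) = (p%:R / q%:R * valpq p q u + a%:R / q%:R)%R.
Proof.
rewrite /valpq size_rcons big_ord_recl rev_rcons /= expr0 mulr1 addrC; congr (_ + _)%R.
rewrite big_distrr /=; apply: eq_bigr => i _.
by rewrite /bump /= exprS; ring.
Qed.

Lemma valpq_cons0 p q w : valpq p q (0 :: w) = valpq p q w.
Proof.
rewrite /valpq /= big_ord_recr /= rev_cons nth_rcons size_rev ltnn eqxx !mul0r addr0.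
apply: eq_bigr => i _; by rewrite nth_rcons size_rev ltn_ord.
Qed.

Lemma valpq_nseq0 p q k w : valpq p q (nseq k 0 ++ w) = valpq p q w.
Proof. by elim: k => //= k IH; rewrite valpq_cons0. Qed.

Lemma valpq_rep p q n : 0 < q -> q < p -> valpq p q (reppq p q n) = (n%:R)%R.
Proof.
move=> q0 hqp; elim/ltn_ind: n => n IH.
case: n IH => [|n] IH; first by rewrite reppq0 valpq_nil.
rewrite reppqS // valpq_rcons IH; last first.
  rewrite ltn_divLR; last by lia.
  by rewrite mulnC ltn_pmul2l; lia.
have e := divn_eq (q * n.+1) p.
have qn0 : (q%:R : rat) != 0%R by rewrite pnatr_eq0 -lt0n.
move: e; set m := (_ %/ p)%N; set a := (_ %% p)%N => e.
apply: (mulfI qn0); rewrite -natrM e natrD natrM; field; exact: qn0.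
Qed.

Lemma inAp_rep p q n : 0 < q -> q < p -> in_Ap p (reppq p q n).
Proof.
move=> q0 hqp; elim/ltn_ind: n => n IH.
case: n IH => [|n] IH; first by [].
rewrite reppqS // /in_Ap all_rcons ltn_mod; apply/andP; split; first lia.
apply: IH; rewrite ltn_divLR; last by lia.
by rewrite mulnC ltn_pmul2l; lia.
Qed.

Lemma valpq_int p q u : 0 < q -> exists N : nat, (valpq p q u * (q ^ size u)%:R = N%:R)%R.
Proof.
move=> q0.
elim/last_ind: u => [|u a [N HN]]; first by exists 0%N; rewrite valpq_nil mul0r.
exists (p * N + a * q ^ size u)%N.
rewrite valpq_rcons size_rcons expnS natrM natrD !natrM -HN.
have h : (q%:R : rat) != 0%R by rewrite pnatr_eq0 -lt0n.
by field.
Qed.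

Lemma natr_injQ (m n : nat) : ((m%:R : rat) = n%:R)%R -> m = n.
Proof. by move/eqP; rewrite eqr_nat => /eqP. Qed.

Lemma val_nat_rep p q w n : coprime p q -> 0 < q -> q < p -> in_Ap p w ->
  valpq p q w = (n%:R)%R -> exists k, w = nseq k 0 ++ reppq p q n.
Proof.
move=> cpq q0 hqp; elim/last_ind: w n => [|u a IH] n.
  rewrite valpq_nil => _ /esym h; have : n = 0 by apply: natr_injQ.
  by move=> ->; exists 0.
rewrite /in_Ap all_rcons => /andP [ap hu].
have [N HN] := valpq_int p u q0.
rewrite valpq_rcons => hv.
have hq : (q%:R : rat) != 0%R by rewrite pnatr_eq0 -lt0n.
have e : (p * N + a * q ^ size u = q * n * q ^ size u)%N.
  apply: natr_injQ; rewrite natrD !natrM -HN -hv; by field.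
have dv : q ^ size u %| N.
  rewrite -(Gauss_dvdr _ (coprimeXl _ _ : coprime (q ^ size u) p)); last by rewrite coprime_sym.
  have -> : (p * N = q ^ size u * (q * n - a))%N.
    move: e; set t := q ^ size u; rewrite mulnBr; nia.
  exact: dvdn_mulr.
case/dvdnP: dv => m Nm.
have qs0 : 0 < q ^ size u by rewrite expn_gt0 q0.
have e2 : (p * m + a = q * n)%N.
  apply/eqP; rewrite -(eqn_pmul2r qs0) mulnDl -mulnA -Nm; apply/eqP; exact: e.
have hm : (q * n) %% p = a by rewrite -e2 mulnC modnMDl modn_small.
have hd : (q * n) %/ p = m by rewrite -e2 mulnC divnMDl ?divn_small ?addn0 //; lia.
have [k ->] : exists k, u = nseq k 0 ++ reppq p q m.
  apply: IH => //; apply: (mulIf (_ : ((q ^ size u)%:R : rat) != 0%R)).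
    by rewrite pnatr_eq0 -lt0n.
  by rewrite HN Nm natrM.
clear hv e; case: n e2 hm hd => [|n] e2 hm hd.
  have a0 : a = 0 by lia.
  have m0 : m = 0 by move: e2; rewrite muln0; nia.
  exists k.+1; rewrite a0 m0 reppq0 cats0 /= -cats1 cats0.
  by elim: k {IH hu HN Nm} => //= k ->.
exists k; rewrite (@reppqS p q n.+1 hqp) // hd hm rcons_cat //.
Qed.
Lemma run_rcons p (Q : finType) (d : Q -> 'I_p -> Q) s w c :
  run d s (rcons w c) = step d (run d s w) c.
Proof. by rewrite /run foldl_rcons. Qed.

Lemma run_cat p (Q : finType) (d : Q -> 'I_p -> Q) s w1 w2 :
  run d s (w1 ++ w2) = run d (run d s w1) w2.
Proof. by rewrite /run foldl_cat. Qed.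

Definition dopt p (Q : finType) (d : Q -> 'I_p -> Q) (q0 : Q) (o : option Q) (b : 'I_p) : option Q :=
  match o with
  | None => if val b == 0 then None else Some (d q0 b)
  | Some s => Some (d s b)
  end.

Lemma step_some p (Q : finType) (d : Q -> 'I_p -> Q) q0 s c :
  step (dopt d q0) (Some s) c = Some (step d s c).
Proof. by rewrite /step; case: insubP. Qed.

Lemma run_some p (Q : finType) (d : Q -> 'I_p -> Q) q0 s w :
  run (dopt d q0) (Some s) w = Some (run d s w).
Proof. by elim: w s => //= c w IH s; rewrite /run /= step_some; apply: IH. Qed.

Lemma run_none0 p (Q : finType) (d : Q -> 'I_p -> Q) q0 k w : 0 < p ->
  run (dopt d q0) None (nseq k 0 ++ w) = run (dopt d q0) None w.
Proof.
move=> p0; elim: k => //= k IH; rewrite /run /=.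
have -> : step (dopt d q0) None 0 = None.
  rewrite /step; case: insubP => //= [b _ <-]; by rewrite eqxx.
by move: IH; rewrite /run.
Qed.

Lemma run_none_rep p q (Q : finType) (d : Q -> 'I_p -> Q) q0 n : 0 < q -> q < p -> 0 < n ->
  run (dopt d q0) None (reppq p q n) = Some (run d q0 (reppq p q n)).
Proof.
move=> q0' hqp; elim/ltn_ind: n => n IH n0.
rewrite (@reppqS p q n hqp n0) !run_rcons.
set m := (q * n) %/ p.
have hlt : m < n.
  rewrite /m ltn_divLR; last by lia.
  by rewrite mulnC ltn_pmul2l; lia.
case: (posnP m) => [m0|mp]; last by rewrite IH // step_some.
rewrite m0 reppq0 /= /step.
have e := divn_eq (q * n) p; rewrite -/m m0 mul0n add0n in e.
case: insubP => [b _ hb|]; last by rewrite ltn_mod; lia.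
by rewrite /= hb -e; case: eqP => //; lia.
Qed.

Lemma forward p q (A : finType) (x : nat -> A) : 0 < q -> q < p -> coprime p q ->
  pq_automatic p q x ->
  (forall a : A, exists R : rat -> Prop,
     pq_recognizable p q R /\ (forall i : nat, x i = a <-> R (i%:R)%R)).
Proof.
move=> q0 hqp cpq [Q [s0 [d [tau H]]]] a.
have p0 : 0 < p by lia.
pose F := [pred o : option Q | tau (odflt s0 o) == a].
exists (fun r => exists w : seq nat,
      [/\ in_Ap p w, run (dopt d s0) None w \in F & valpq p q w = r]).
split; first by exists (option Q), None, (dopt d s0), F.
have key : forall i, odflt s0 (run (dopt d s0) None (reppq p q i)) = run d s0 (reppq p q i).
  move=> i; case: (posnP i) => [->|ip]; first by [].
  by rewrite run_none_rep.
move=> i; split.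
  move=> xi; exists (reppq p q i); split.
  - exact: inAp_rep.
  - by rewrite inE key -H xi.
  - exact: valpq_rep.
case=> w [hw hF hv].
have [k wk] := val_nat_rep cpq q0 hqp hw hv; rewrite wk in hF.
move: hF; rewrite run_none0 // inE key -H; by move/eqP.
Qed.

Record DFA (p : nat) := mkDFA { St : finType; st0 : St; dl : St -> 'I_p -> St; fin : pred St }.

Definition FT p (A : finType) (D : A -> DFA p) (a : A) : finType :=
  {ffun St (D a) -> St (D a)}.

Definition PT p (A : finType) (D : A -> DFA p) : finType :=
  {dffun forall a : A, FT D a}.

Definition dPT p (A : finType) (D : A -> DFA p) (g : PT D) (b : 'I_p) : PT D :=
  @finfun A (FT D) (fun a => [ffun s => dl (g a s) b]).

Definition gPT p (A : finType) (D : A -> DFA p) : PT D :=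
  @finfun A (FT D) (fun a => [ffun s => s]).

Lemma run_PT p (A : finType) (D : A -> DFA p) w (g : PT D) a s :
  (run (@dPT p A D) g w) a s = run (@dl p (D a)) (g a s) w.
Proof.
elim: w g => //= c w IH g; rewrite /run /= -/(run _ _ w) IH.
rewrite /step; case: insubP => //= b _ _.
by rewrite /dPT !ffunE.
Qed.

Lemma backward p q (A : finType) (x : nat -> A) : 0 < q -> q < p -> coprime p q ->
  (forall a : A, exists R : rat -> Prop,
     pq_recognizable p q R /\ (forall i : nat, x i = a <-> R (i%:R)%R)) ->
  pq_automatic p q x.
Proof.
move=> q0 hqp cpq H.
have p0 : 0 < p by lia.
have H' : forall a : A, exists D : DFA p, forall i, x i = a <->
    exists k, run (@dl p D) (@st0 p D) (nseq k 0 ++ reppq p q i) \in @fin p D.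
  move=> a; have [R [[Q [s0 [d [F HR]]]] HxR]] := H a.
  exists (mkDFA s0 d F) => i; rewrite HxR HR /=; split.
    case=> w [hw hF hv]; have [k wk] := val_nat_rep cpq q0 hqp hw hv.
    by exists k; rewrite -wk.
  case=> k hk; exists (nseq k 0 ++ reppq p q i); split => //.
    rewrite /in_Ap all_cat; apply/andP; split; [by apply/allP => y /nseqP [-> _] | exact: inAp_rep].
  by rewrite valpq_nseq0 valpq_rep.
pose D := fun a => proj1_sig (constructive_indefinite_description _ (H' a)).
have HD : forall a i, x i = a <->
    exists k, run (@dl p (D a)) (@st0 p (D a)) (nseq k 0 ++ reppq p q i) \in @fin p (D a).
  by move=> a; exact: (proj2_sig (constructive_indefinite_description _ (H' a))).
pose P := fun (g : PT D) (a : A) =>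
  exists k, g a (run (@dl p (D a)) (@st0 p (D a)) (nseq k 0)) \in @fin p (D a).
pose tau := fun g : PT D => epsilon (inhabits (x 0)) (P g).
exists (PT D), (gPT D), (@dPT p A D), tau => n.
have HP : forall a, P (run (@dPT p A D) (gPT D) (reppq p q n)) a <-> x n = a.
  move=> a; rewrite HD /P; split; case=> k hk; exists k.
    by move: hk; rewrite run_PT /gPT ffunE ffunE run_cat.
  by rewrite run_PT /gPT ffunE ffunE -run_cat.
apply: (proj1 (HP _)); apply: epsilon_spec; exists (x n); exact: (proj2 (HP _)).
Qed.

Theorem mainTheorem13 (p q : nat) (hcop : coprime p q) (hq : 1 < q) (hpq : q < p)
  (A : finType) (x : nat -> A) :
  pq_automatic p q x <->
  (forall a : A, exists R : rat -> Prop,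
     pq_recognizable p q R /\ (forall i : nat, x i = a <-> R (i%:R)%R)).
Proof.
have q0 : 0 < q by lia.
split; [exact: forward | exact: backward].
Qed.
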